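(* Let $h:\mathbb{R}\to\mathbb{R}$ be of class $C^1$, let $x_0\in\mathbb{R}$, and let $\Phi$ be a positive function of class $C^2$ on an interval $]x_-,x_+[$ with $x_-<x_0<x_+$, such that $h(x)\neq\Phi^2(x)$ on $]x_-,x_+[$. Define $u_{\mathtt{top}},u_{\mathtt{bot}}$ as in the context, and \[ \Theta_{\mathtt{top}}(x)=\frac{u'_{\mathtt{top}}(x)}{u_{\mathtt{top}}(x)}=\Phi(x)\frac{\Phi'(x)-\sqrt{\left[h(x)-\Phi^{2}(x)\right]^{2}+\left[\Phi'(x)\right]^{2}}}{h(x)-\Phi^{2}(x)},\quad \Theta_{\mathtt{bot}}(x)=\frac{u'_{\mathtt{bot}}(x)}{u_{\mathtt{bot}}(x)}=\Phi(x)\frac{\Phi'(x)+\sqrt{\left[h(x)-\Phi^{2}(x)\right]^{2}+\left[\Phi'(x)\right]^{2}}}{h(x)-\Phi^{2}(x)}. \] Then $\Theta_{\mathtt{top}}$ and $\Theta_{\mathtt{bot}}$ are two distinct solutions of the Riccati equation $\Theta'(x)+\Theta^2(x)+h(x)=0$ on $]x_-,x_+[$ if and only if $\Phi$ satisfies on $]x_-,x_+[$ \[ \Phi''(x)=\frac{3\Phi^{2}(x)+h(x)}{\Phi^{2}(x)-h(x)}\frac{\left[\Phi'(x)\right]^{2}}{\Phi(x)}-\frac{h'(x)\Phi'(x)}{\Phi^{2}(x)-h(x)}+\frac{\Phi^{4}(x)-h^{2}(x)}{\Phi(x)}. \] Moreover, these relations can be uniquely inverted: \[ \Phi(x)=\sqrt{-\frac{u'_{\mathtt{top}}(x)u'_{\mathtt{bot}}(x)}{u_{\mathtt{top}}(x)u_{\mathtt{bot}}(x)}}=\sqrt{-\Theta_{\mathtt{top}}(x)\Theta_{\mathtt{bot}}(x)}.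 \]
   Context: For $x\in]x_-,x_+[$, $u_{\mathtt{top}}(x)=\exp\left[\int_{x_0}^{x}\Theta_{\mathtt{top}}(\xi)\,d\xi\right]$ and $u_{\mathtt{bot}}(x)=\exp\left[\int_{x_0}^{x}\Theta_{\mathtt{bot}}(\xi)\,d\xi\right]$ with $\Theta_{\mathtt{top}},\Theta_{\mathtt{bot}}$ given by the displayed formulas. The ODE for $\Phi$ is the geodesic equation in explicit form for the metric $g_h=\left[(h(x)-\varPhi^2)^2dx^2+d\varPhi^2\right]/\varPhi^2$ on the upper half plane $\varPhi>0$. *)

(* Defs.v *)
From Stdlib Require Import Reals.
From Coquelicot Require Import Coquelicot.
Open Scope R_scope.

Definition Theta_top (h Phi : R -> R) (x : R) : R :=
  Phi x * (Derive Phi x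
           - sqrt ((h x - Phi x ^ 2) ^ 2 + (Derive Phi x) ^ 2))
        / (h x - Phi x ^ 2).

Definition Theta_bot (h Phi : R -> R) (x : R) : R :=
  Phi x * (Derive Phi x
           + sqrt ((h x - Phi x ^ 2) ^ 2 + (Derive Phi x) ^ 2))
        / (h x - Phi x ^ 2).

Definition u_top (h Phi : R -> R) (x0 x : R) : R :=
  exp (RInt (Theta_top h Phi) x0 x).

Definition u_bot (h Phi : R -> R) (x0 x : R) : R :=
  exp (RInt (Theta_bot h Phi) x0 x).

Definition riccati_sol (h Theta : R -> R) (a b : R) : Prop :=
  forall x, a < x < b -> is_derive Theta x (- (Theta x ^ 2 + h x)).

(* Main.v *)
Require Import Defs.
From Stdlib Require Import Reals Lra FunctionalExtensionality.
From Coquelicot Require Import Coquelicot.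
Open Scope R_scope.
Definition Th (h Phi : R -> R) (e x : R) : R :=
  Phi x * (Derive Phi x + e * sqrt ((h x - Phi x ^ 2) ^ 2 + Derive Phi x ^ 2))
        / (h x - Phi x ^ 2).

Definition dT (F P Q H K S e : R) : R :=
  ((P*(P+e*S) + F*(Q + e*((H-F^2)*(K-2*F*P) + P*Q)/S))*(H-F^2)
    - F*(P+e*S)*(K-2*F*P))/(H-F^2)^2.

Lemma derTh (h Phi : R -> R) e x : ex_derive h x -> ex_derive Phi x -> ex_derive (Derive Phi) x ->
  h x - Phi x ^ 2 <> 0 ->
  is_derive (Th h Phi e) x (dT (Phi x) (Derive Phi x) (Derive (Derive Phi) x) (h x) (Derive h x)
     (sqrt ((h x - Phi x ^ 2) ^ 2 + Derive Phi x ^ 2)) e).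
Proof.
  intros H1 H2 H3 HD.
  assert (Hpos : 0 < (h x - Phi x ^ 2) ^ 2 + Derive Phi x ^ 2).
  { assert (0 < (h x - Phi x ^ 2) ^ 2) by (apply pow2_gt_0; auto).
    assert (0 <= Derive Phi x ^ 2) by apply pow2_ge_0. lra. }
  unfold Th. auto_derive.
  - repeat split; auto.
    + replace ((h x + - (Phi x * (Phi x * 1))) * ((h x + - (Phi x * (Phi x * 1))) * 1) +
        Derive Phi x * (Derive Phi x * 1)) with ((h x - Phi x ^ 2) ^ 2 + Derive Phi x ^ 2) by ring. auto.
  - change (fun x0 : R => Phi x0) with Phi.
    change (fun x0 : R => h x0) with h.
    change (fun x0 : R => Derive Phi x0) with (Derive Phi).
    replace ((h x + - (Phi x * (Phi x * 1))) * ((h x + - (Phi x * (Phi x * 1))) * 1) +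
        Derive Phi x * (Derive Phi x * 1)) with ((h x - Phi x ^ 2) ^ 2 + Derive Phi x ^ 2) by ring.
    assert (HS : 0 < sqrt ((h x - Phi x ^ 2) ^ 2 + Derive Phi x ^ 2)) by (apply sqrt_lt_R0; auto).
    set (S := sqrt ((h x - Phi x ^ 2) ^ 2 + Derive Phi x ^ 2)) in *.
    unfold dT. field. split; [lra|]. intro; apply HD; rewrite <- H; ring.
Qed.

Definition RHS (F P H K : R) : R :=
  (3 * F ^ 2 + H) / (F ^ 2 - H) * P ^ 2 / F
        - K * P / (F ^ 2 - H) + (F ^ 4 - H ^ 2) / F.

Lemma key_alg (F P Q H K S e : R) : (e = 1 \/ e = -1) -> F <> 0 -> H - F^2 <> 0 ->
  0 < S -> S*S = (H-F^2)^2 + P^2 ->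
  dT F P Q H K S e + (F*(P+e*S)/(H-F^2))^2 + H
  = (S + e*P) * F * (Q - RHS F P H K) / (S * (H-F^2)).
Proof.
  intros He HF HD HS HSS.
  assert (HD' : F^2 - H <> 0) by (intro; apply HD; lra).
  assert (E : dT F P Q H K S e + (F*(P+e*S)/(H-F^2))^2 + H
    - (S + e*P) * F * (Q - RHS F P H K) / (S * (H-F^2))
    = (S*S - ((H-F^2)^2 + P^2)) *
      (e*P*(H-F^2) - e*F*(K-2*F*P) + 2*e*F^2*P + F^2*S) / (S*(H-F^2)^2)).
  { unfold dT, RHS. destruct He; subst e; field; repeat split; lra. }
  rewrite HSS in E. lra.
Qed.

Lemma Th_top h Phi : Theta_top h Phi = Th h Phi (-1).
Proof. apply functional_extensionality; intro y; unfold Theta_top, Th, Rdiv; ring. Qed.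
Lemma Th_bot h Phi : Theta_bot h Phi = Th h Phi 1.
Proof. apply functional_extensionality; intro y; unfold Theta_bot, Th, Rdiv; ring. Qed.

Lemma sqrt_facts (D P : R) : D <> 0 ->
  let S := sqrt (D ^ 2 + P ^ 2) in 0 < S /\ S * S = D^2 + P^2 /\ 0 < S + P /\ 0 < S - P.
Proof.
  intros HD S.
  assert (h1 : 0 < D ^ 2) by (apply pow2_gt_0; auto).
  assert (h2 : 0 <= P ^ 2) by apply pow2_ge_0.
  assert (HS : 0 < S) by (apply sqrt_lt_R0; lra).
  assert (HSS : S * S = D^2 + P^2) by (apply sqrt_sqrt; lra).
  split; [auto|split; [auto|]]. split; nra.
Qed.

Lemma riccati_iff (h Phi : R -> R) e x : (e = 1 \/ e = -1) ->
  ex_derive h x -> ex_derive Phi x -> ex_derive (Derive Phi) x ->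
  0 < Phi x -> h x <> Phi x ^ 2 ->
  (is_derive (Th h Phi e) x (- (Th h Phi e x ^ 2 + h x)) <->
   Derive (Derive Phi) x = RHS (Phi x) (Derive Phi x) (h x) (Derive h x)).
Proof.
  intros He Hh HP HP2 HF Hne.
  assert (HD : h x - Phi x ^ 2 <> 0) by (intro; apply Hne; lra).
  destruct (sqrt_facts (h x - Phi x ^ 2) (Derive Phi x) HD) as [HS [HSS [Hp Hm]]].
  assert (HeP : 0 < sqrt ((h x - Phi x ^ 2) ^ 2 + Derive Phi x ^ 2) + e * Derive Phi x)
    by (destruct He; subst; lra).
  pose proof (derTh h Phi e x Hh HP HP2 HD) as Hd.
  pose proof (key_alg (Phi x) (Derive Phi x) (Derive (Derive Phi) x) (h x) (Derive h x)
     (sqrt ((h x - Phi x ^ 2) ^ 2 + Derive Phi x ^ 2)) e He ltac:(lra) HD HS HSS) as K.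
  set (S := sqrt ((h x - Phi x ^ 2) ^ 2 + Derive Phi x ^ 2)) in *.
  set (Q := Derive (Derive Phi) x) in *.
  set (RR := RHS (Phi x) (Derive Phi x) (h x) (Derive h x)) in *.
  set (dd := dT (Phi x) (Derive Phi x) Q (h x) (Derive h x) S e) in *.
  assert (ET : Th h Phi e x = Phi x * (Derive Phi x + e * S) / (h x - Phi x ^ 2)) by reflexivity.
  split.
  - intro Hr. apply is_derive_unique in Hr. apply is_derive_unique in Hd.
    rewrite Hd in Hr. rewrite ET in Hr.
    assert (Z : (S + e * Derive Phi x) * Phi x * (Q - RR) = 0).
    { replace ((S + e * Derive Phi x) * Phi x * (Q - RR)) with
        ((S + e * Derive Phi x) * Phi x * (Q - RR) / (S * (h x - Phi x ^ 2)) * (S * (h x - Phi x ^ 2)))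
        by (field; split; lra).
      rewrite <- K, Hr. ring. }
    apply Rmult_integral in Z. destruct Z as [Z|Z]; [|lra].
    apply Rmult_integral in Z. destruct Z; lra.
  - intro Hq.
    replace (- (Th h Phi e x ^ 2 + h x)) with dd; auto.
    rewrite ET.
    assert (dd + (Phi x * (Derive Phi x + e * S) / (h x - Phi x ^ 2)) ^ 2 + h x = 0).
    { rewrite K. fold Q. rewrite Hq. fold RR. unfold Rminus. rewrite Rplus_opp_r. field. split; lra. }
    lra.
Qed.

Lemma loc_int xm xp x : xm < x < xp -> locally x (fun y => xm < y < xp).
Proof.
  intro Hx. apply (open_and (fun u => xm < u) (fun u => u < xp) (open_gt xm) (open_lt xp)). auto.
Qed.

Theorem corollary2p11
  (h Phi : R -> R) (x0 xm xp : R)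
  (Hh : forall x, ex_derive h x /\ continuous (Derive h) x)
  (Hint : xm < x0 < xp)
  (HPhi : forall x, xm < x < xp ->
     ex_derive Phi x /\ ex_derive (Derive Phi) x /\
     continuous (Derive (Derive Phi)) x)
  (Hpos : forall x, xm < x < xp -> 0 < Phi x)
  (Hne : forall x, xm < x < xp -> h x <> Phi x ^ 2) :
  ((riccati_sol h (Theta_top h Phi) xm xp /\
    riccati_sol h (Theta_bot h Phi) xm xp /\
    (exists x, xm < x < xp /\ Theta_top h Phi x <> Theta_bot h Phi x))
   <->
   (forall x, xm < x < xp ->
      Derive (Derive Phi) x =
        (3 * Phi x ^ 2 + h x) / (Phi x ^ 2 - h x) * (Derive Phi x) ^ 2 / Phi x
        - Derive h x * Derive Phi x / (Phi x ^ 2 - h x)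
        + (Phi x ^ 4 - h x ^ 2) / Phi x))
  /\
  (forall x, xm < x < xp ->
     Phi x = sqrt (- (Derive (u_top h Phi x0) x * Derive (u_bot h Phi x0) x)
                   / (u_top h Phi x0 x * u_bot h Phi x0 x))
     /\ Phi x = sqrt (- (Theta_top h Phi x * Theta_bot h Phi x))).
Proof.
  unfold riccati_sol, u_top, u_bot. rewrite Th_top, Th_bot.
  assert (RI : forall e x, (e = 1 \/ e = -1) -> xm < x < xp ->
    (is_derive (Th h Phi e) x (- (Th h Phi e x ^ 2 + h x)) <->
     Derive (Derive Phi) x = RHS (Phi x) (Derive Phi x) (h x) (Derive h x))).
  { intros e x He Hx. destruct (HPhi x Hx) as [A [B _]].
    apply riccati_iff; auto. apply Hh. }
  assert (Prod : forall x, xm < x < xp -> Th h Phi (-1) x * Th h Phi 1 x = - (Phi x ^ 2)).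
  { intros x Hx.
    assert (HD : h x - Phi x ^ 2 <> 0) by (intro; apply (Hne x Hx); lra).
    destruct (sqrt_facts (h x - Phi x ^ 2) (Derive Phi x) HD) as [HS [HSS _]].
    unfold Th. set (S := sqrt ((h x - Phi x ^ 2) ^ 2 + Derive Phi x ^ 2)) in *.
    replace (Phi x * (Derive Phi x + -1 * S) / (h x - Phi x ^ 2) *
      (Phi x * (Derive Phi x + 1 * S) / (h x - Phi x ^ 2)))
      with (Phi x ^ 2 * (Derive Phi x ^ 2 - S * S) / (h x - Phi x ^ 2) ^ 2) by (field; auto).
    rewrite HSS. field. auto. }
  assert (Sq : forall x, xm < x < xp -> Phi x = sqrt (- (Th h Phi (-1) x * Th h Phi 1 x))).
  { intros x Hx. rewrite Prod by auto. rewrite Ropp_involutive, sqrt_pow2; auto.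
    left; apply Hpos; auto. }
  assert (Cont : forall e z, (e = 1 \/ e = -1) -> xm < z < xp -> continuous (Th h Phi e) z).
  { intros e z He Hz. apply (ex_derive_continuous (K:=R_AbsRing) (V:=R_NormedModule)).
    destruct (HPhi z Hz) as [A [B _]].
    eexists. apply derTh; auto. apply Hh. intro; apply (Hne z Hz); lra. }
  assert (DU : forall e x, (e = 1 \/ e = -1) -> xm < x < xp ->
    Derive (fun y => exp (RInt (Th h Phi e) x0 y)) x =
      Th h Phi e x * exp (RInt (Th h Phi e) x0 x)).
  { intros e x He Hx. apply is_derive_unique.
    apply (is_derive_comp exp (RInt (Th h Phi e) x0) x).
    - apply is_derive_exp.
    - apply (is_derive_RInt (Th h Phi e) (RInt (Th h Phi e) x0) x0 x); [|apply Cont; auto].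
      apply (filter_imp (fun y => xm < y < xp)); [|apply loc_int; auto].
      intros y Hy. apply (RInt_correct (V:=R_CompleteNormedModule)). apply (ex_RInt_continuous (V:=R_CompleteNormedModule)).
      intros z Hz. apply Cont; auto.
      destruct Hz as [Hz1 Hz2].
      assert (Rmin x0 y <= z) by exact Hz1. assert (z <= Rmax x0 y) by exact Hz2.
      unfold Rmin, Rmax in *. destruct (Rle_dec x0 y); split; lra. }
  split.
  - split.
    + intros [Rt _] x Hx. apply (RI (-1) x); auto.
    + intros Hq. split; [|split].
      * intros x Hx. apply (RI (-1) x); auto.
      * intros x Hx. apply (RI 1 x); auto.
      * exists x0. split; auto. intro Heq.
        assert (HD : h x0 - Phi x0 ^ 2 <> 0) by (intro; apply (Hne x0 Hint); lra).
        destruct (sqrt_facts (h x0 - Phi x0 ^ 2) (Derive Phi x0) HD) as [HS _].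
        pose proof (Hpos x0 Hint) as HF.
        unfold Th in Heq. set (S := sqrt ((h x0 - Phi x0 ^ 2) ^ 2 + Derive Phi x0 ^ 2)) in *.
        assert (Z : 2 * Phi x0 * S = 0).
        { replace (2 * Phi x0 * S) with
            ((Phi x0 * (Derive Phi x0 + 1 * S) / (h x0 - Phi x0 ^ 2)
              - Phi x0 * (Derive Phi x0 + -1 * S) / (h x0 - Phi x0 ^ 2)) * (h x0 - Phi x0 ^ 2))
            by (field; auto).
          rewrite Heq. ring. }
        nra.
  - intros x Hx. split; [|apply Sq; auto].
    rewrite (DU (-1) x), (DU 1 x); auto.
    replace (- (Th h Phi (-1) x * exp (RInt (Th h Phi (-1)) x0 x) *
               (Th h Phi 1 x * exp (RInt (Th h Phi 1) x0 x))) /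
             (exp (RInt (Th h Phi (-1)) x0 x) * exp (RInt (Th h Phi 1) x0 x)))
      with (- (Th h Phi (-1) x * Th h Phi 1 x)).
    + apply Sq; auto.
    + field. split; apply Rgt_not_eq, exp_pos.
Qed.
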